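(* Fix $\xi\in[0,0.13]$ and let $y_i\in[\cos(2\pi/9),1)$ for all $i\in\{2,3,5,6\}$. Then for any $j\in\{2,3,5,6\}$ with $y_j,y_{j'}\le\cos(2\pi/10)$, one has $$\frac{\partial\psi_\xi}{\partial y_j}(\delta,y_2,y_3,y_5,y_6)\ge0\quad\text{and}\quad\frac{\partial\psi_\xi}{\partial y_{j'}}(\delta,y_2,y_3,y_5,y_6)\ge0$$ for all $\delta\in[0,0.13]$.
   Context: Pairing: $2'=6$, $3'=5$, $5'=3$, $6'=2$. For $\xi\ge0$, $y\in(0,1)$: $\eta_\xi(y)=\frac{-2-5y+(1+\xi)^2+\sqrt{(2+5y-(1+\xi)^2)^2+4(2+y)(1-y)(1+\xi)^2}}{2+y}$. Let $b(y)=\frac{16}{y+1}-7$, $c_n=\cos(2\pi/n)$, $\beta(y)=b(y)$ on $[c_{10},1]$ and $\beta(y)=\frac{(2-b(c_{10}))b(y)-(2-b(c_9))b(c_{10})}{b(c_9)-b(c_{10})}$ on $[c_9,c_{10}]$. Define $$G(\delta,\eta_2,\eta_3,\eta_5,\eta_6,\beta_2,\beta_3,\beta_5,\beta_6)=\frac{1+\dfrac{\delta[(1+\eta_2)(1+\eta_5)+(1+\eta_3)(1+\eta_6)]-2\delta(\delta+2)}{(2+\eta_2+\eta_6)(2+\eta_3+\eta_5)}}{\sqrt{1+\dfrac{\delta^2+2(1+\beta_2\beta_6)\delta}{(2+\eta_2+\eta_6)^2}}\sqrt{1+\dfrac{\delta^2+2(1+\beta_3\beta_5)\delta}{(2+\eta_3+\eta_5)^2}}}$$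 and $\psi_\xi(\delta,y_2,y_3,y_5,y_6)=G(\delta,\eta_\xi(y_2),\eta_\xi(y_3),\eta_\xi(y_5),\eta_\xi(y_6),\beta(y_2),\beta(y_3),\beta(y_5),\beta(y_6))$. *)

(* Defs.v *)
From Stdlib Require Import Reals.
From Coquelicot Require Import Coquelicot.
Open Scope R_scope.

Definition eta (xi y : R) : R :=
  (-2 - 5*y + (1+xi)^2
   + sqrt ((2 + 5*y - (1+xi)^2)^2 + 4*(2+y)*(1-y)*(1+xi)^2)) / (2 + y).

Definition b (y : R) : R := 16 / (y + 1) - 7.

Definition c (n : R) : R := cos (2 * PI / n).

(* beta: b on [c_10, 1], the affine-in-b formula on [c_9, c_10]
   (the two branches agree at c_10; outside [c_9,1] the value is irrelevant). *)
Definition beta (y : R) : R :=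
  if Rle_dec y (c 10) then
    ((2 - b (c 10)) * b y - (2 - b (c 9)) * b (c 10)) / (b (c 9) - b (c 10))
  else b y.

Definition G (d e2 e3 e5 e6 b2 b3 b5 b6 : R) : R :=
  (1 + (d * ((1+e2)*(1+e5) + (1+e3)*(1+e6)) - 2*d*(d+2))
        / ((2+e2+e6)*(2+e3+e5)))
  / (sqrt (1 + (d^2 + 2*(1+b2*b6)*d) / (2+e2+e6)^2)
     * sqrt (1 + (d^2 + 2*(1+b3*b5)*d) / (2+e3+e5)^2)).

Definition psi (xi d y2 y3 y5 y6 : R) : R :=
  G d (eta xi y2) (eta xi y3) (eta xi y5) (eta xi y6)
      (beta y2) (beta y3) (beta y5) (beta y6).

Definition valid_index (j : nat) : Prop := j = 2%nat \/ j = 3%nat \/ j = 5%nat \/ j = 6%nat.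

Definition pair_index (j : nat) : nat :=
  match j with 2 => 6 | 3 => 5 | 5 => 3 | 6 => 2 | _ => j end%nat.

Definition yval (j : nat) (y2 y3 y5 y6 : R) : R :=
  match j with 2 => y2 | 3 => y3 | 5 => y5 | _ => y6 end%nat.

Definition psi_coord (xi d y2 y3 y5 y6 : R) (j : nat) (t : R) : R :=
  psi xi d (if Nat.eqb j 2 then t else y2) (if Nat.eqb j 3 then t else y3)
           (if Nat.eqb j 5 then t else y5) (if Nat.eqb j 6 then t else y6).

Definition is_derive_within (D : R -> Prop) (f : R -> R) (x l : R) : Prop :=
  filterlim (fun t => (f t - f x) / (t - x))
            (within (fun t => D t /\ t <> x) (locally x)) (locally l).

(* Partial derivative of psi_xi in y_j, taken on the piece [c_9, c_10]
   where beta has the single (smooth) formula. *)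
Definition dpsi_nonneg (xi d y2 y3 y5 y6 : R) (j : nat) : Prop :=
  exists l, is_derive_within (fun t => c 9 <= t <= c 10)
              (psi_coord xi d y2 y3 y5 y6 j) (yval j y2 y3 y5 y6) l /\ 0 <= l.

(* Main.v *)
Require Import Defs.
From Stdlib Require Import Reals Lra Psatz.
From Coquelicot Require Import Coquelicot.
Open Scope R_scope.

Lemma PI_bounds : 3.1415 <= PI <= 3.1417.
Proof.
  destruct (PI_2_3_7_ineq 2) as [H1 H2].
  unfold tg_alt, PI_2_3_7_tg, Ratan_seq in H1, H2.
  simpl in H1, H2.
  split; lra.
Qed.

Lemma cos_num (a : R) : 0 <= a <= 1 ->
  1 - a^2/2 + a^4/24 - a^6/720 <= cos a <= 1 - a^2/2 + a^4/24 - a^6/720 + a^8/40320.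
Proof.
  intros Ha. pose proof PI_bounds.
  destruct (cos_bound a 1) as [H1 H2]; try lra.
  unfold cos_approx in H1, H2. change (2*1+1)%nat with 3%nat in H1. change (2*(1+1))%nat with 4%nat in H2. cbn [sum_f_R0] in H1, H2. unfold cos_term in H1, H2.
  replace (2*0)%nat with 0%nat in * by reflexivity.
  replace (2*1)%nat with 2%nat in * by reflexivity.
  replace (2*2)%nat with 4%nat in * by reflexivity.
  replace (2*3)%nat with 6%nat in * by reflexivity.
  replace (2*4)%nat with 8%nat in * by reflexivity.
  assert (F8 : INR (Factorial.fact 8) = 40320) by (rewrite !Rfunctions.fact_simpl, !mult_INR; simpl; ring).
  assert (F6 : INR (Factorial.fact 6) = 720) by (rewrite !Rfunctions.fact_simpl, !mult_INR; simpl; ring).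
  assert (F4 : INR (Factorial.fact 4) = 24) by (rewrite !Rfunctions.fact_simpl, !mult_INR; simpl; ring).
  assert (F2 : INR (Factorial.fact 2) = 2) by (simpl; ring).
  assert (F0 : INR (Factorial.fact 0) = 1) by (simpl; ring).
  rewrite F8, F6, F4, F2, F0 in *. simpl pow in H1, H2.
  split; [ring_simplify in H1 | ring_simplify in H2]; nra.
Qed.

Lemma c9_bounds : 0.765 <= c 9 <= 0.767.
Proof.
  pose proof PI_bounds. unfold c.
  split.
  - apply Rle_trans with (cos 0.6982).
    + destruct (cos_num 0.6982); lra.
    + apply cos_decr_1; lra.
  - apply Rle_trans with (cos 0.698).
    + apply cos_decr_1; lra.
    + destruct (cos_num 0.698); lra.
Qed.

Lemma c10_bounds : 0.808 <= c 10 <= 0.8091.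
Proof.
  pose proof PI_bounds. unfold c.
  split.
  - apply Rle_trans with (cos 0.6284).
    + destruct (cos_num 0.6284); lra.
    + apply cos_decr_1; lra.
  - apply Rle_trans with (cos 0.6283).
    + apply cos_decr_1; lra.
    + destruct (cos_num 0.6283); lra.
Qed.

Definition Dis (xi y : R) := (2 + 5*y - (1+xi)^2)^2 + 4*(2+y)*(1-y)*(1+xi)^2.

Lemma Dis_pos xi y : 0 <= xi -> 0.7 <= y < 1 -> 0 < Dis xi y.
Proof. intros. unfold Dis.
  assert (0 < (2+y)*(1-y)) by nra. assert (1 <= (1+xi)^2) by nra.
  pose proof (pow2_ge_0 (2 + 5*y - (1+xi)^2)). nra. Qed.

Lemma eta_eq xi y : eta xi y = (-2 - 5*y + (1+xi)^2 + sqrt (Dis xi y)) / (2+y).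
Proof. reflexivity. Qed.

Lemma eta_bounds xi y : 0 <= xi <= 0.13 -> 0.765 <= y < 1 -> 0 <= eta xi y <= 0.13.
Proof.
  intros Hxi Hy. rewrite eta_eq.
  pose proof (Dis_pos xi y ltac:(lra) ltac:(lra)) as HD.
  pose proof (sqrt_sqrt (Dis xi y) ltac:(lra)) as Hs.
  pose proof (sqrt_pos (Dis xi y)) as Hs0.
  set (s := sqrt (Dis xi y)) in *. unfold Dis in Hs.
  set (a := (1+xi)^2) in *.
  assert (Ha : 1 <= a <= 1.2769) by (unfold a; nra).
  assert (H1 : 0 <= (2+y)*(1-y)*a) by (apply Rmult_le_pos; nra).
  assert (Hsp : 2 + 5*y - a <= s).
  { destruct (Rle_lt_dec (2 + 5*y - a) s) as [h|h]; [exact h|].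
    assert (s*s < (2 + 5*y - a)*(2 + 5*y - a)) by (apply Rmult_le_0_lt_compat; lra). nra. }
  assert (Hsq : s <= 2 + 5*y - a + 0.13*(2+y)).
  { destruct (Rle_lt_dec s (2 + 5*y - a + 0.13*(2+y))) as [h|h]; [exact h|].
    assert ((2 + 5*y - a + 0.13*(2+y))*(2 + 5*y - a + 0.13*(2+y)) < s*s) by (apply Rmult_le_0_lt_compat; lra).
    assert (4*(1-y)*a <= 0.26*(2+5*y-a) + 0.0169*(2+y)) by nra.
    nra. }
  split.
  - apply Rdiv_le_0_compat; lra.
  - apply Rmult_le_reg_r with (2+y); [lra|]. unfold Rdiv. rewrite Rmult_assoc, Rinv_l by lra. lra.
Qed.

Lemma eta_deriv xi y : 0 <= xi <= 0.13 -> 0.765 <= y < 1 ->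
  is_derive (eta xi) y (- (eta xi y ^ 2 + 10 * eta xi y + 4 * (1+xi)^2) / (2 * sqrt (Dis xi y))).
Proof.
  intros Hxi Hy.
  pose proof (Dis_pos xi y ltac:(lra) ltac:(lra)) as HD.
  pose proof (sqrt_sqrt (Dis xi y) ltac:(lra)) as Hs.
  pose proof (sqrt_lt_R0 (Dis xi y) HD) as Hs0.
  unfold eta. fold (Dis xi y).
  auto_derive.
  - unfold Dis in HD. split; [ | split; [lra | exact I]].
    ring_simplify. ring_simplify in HD. lra.
  - repeat match goal with |- context [sqrt ?q] => lazymatch q with Dis _ _ => fail | _ => replace q with (Dis xi y) by (unfold Dis; ring) end end.
    set (s := sqrt (Dis xi y)) in *. unfold Dis in Hs.
    field_simplify; [| lra | lra].
    assert (Hs2 : s^2 = (2 + 5 * y - (1 + xi) ^ 2) ^ 2 + 4 * (2 + y) * (1 - y) * (1 + xi) ^ 2) by (rewrite <- Hs; ring).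
    rewrite Hs2. field. nra.
Qed.

Lemma div_ge (p q l : R) : 0 < q -> l * q <= p -> l <= p / q.
Proof. intros Hq H. apply Rmult_le_reg_r with q; auto. unfold Rdiv. rewrite Rmult_assoc, Rinv_l; lra. Qed.
Lemma div_le (p q u : R) : 0 < q -> p <= u * q -> p / q <= u.
Proof. intros Hq H. apply Rmult_le_reg_r with q; auto. unfold Rdiv. rewrite Rmult_assoc, Rinv_l; lra. Qed.

Lemma div_nonneg (p q : R) : 0 <= p -> 0 < q -> 0 <= p / q.
Proof. intros. unfold Rdiv. apply Rmult_le_pos; [lra|]. left. apply Rinv_0_lt_compat. lra. Qed.

Definition Tf (d e0 E3 E5 E6 L0 B6 e1 L1 : R) : R :=
  let A := 2 + e0 + E6 in let B := 2 + E3 + E5 in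
  let P := (1+e0)*(1+E5)+(1+E3)*(1+E6) in
  let N := 1 + (d*P - 2*d*(d+2))/(A*B) in
  let X := d^2 + 2*(1+L0*B6)*d in
  let Q := 1 + X/A^2 in
  let M := (1+E6)*(E5-E3)+2*d+4 in
  let Y := d + 2*(1+L0*B6) in
  Q*e1*M/B - N*L1*B6 + N*Y*e1/A.

Lemma T_nonneg d e0 E3 E5 E6 L0 B6 e1 L1 :
  0 <= d <= 0.13 -> 0 <= e0 <= 0.13 -> 0 <= E3 <= 0.13 -> 0 <= E5 <= 0.13 -> 0 <= E6 <= 0.13 ->
  1.843 <= L0 <= 2 -> 1.843 <= B6 <= 2 -> -0.66 <= e1 -> L1 <= -3.2 ->
  0 <= Tf d e0 E3 E5 E6 L0 B6 e1 L1.
Proof.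
  intros Hd He0 HE3 HE5 HE6 HL0 HB6 He1 HL1. unfold Tf.
  set (A := 2 + e0 + E6). set (B := 2 + E3 + E5).
  set (P := (1+e0)*(1+E5)+(1+E3)*(1+E6)).
  assert (HA : 2 <= A <= 2.26) by (unfold A; lra).
  assert (HB : 2 <= B <= 2.26) by (unfold B; lra).
  assert (HP : 2 <= P <= 2.6) by (unfold P; nra).
  assert (HAB : 4 <= A*B) by nra.
  assert (HN1 : (d*P - 2*d*(d+2))/(A*B) <= 0).
  { apply div_le; [lra|]. nra. }
  assert (HN2 : -0.08 <= (d*P - 2*d*(d+2))/(A*B)).
  { apply div_ge; [lra|]. nra. }
  set (N := 1 + (d*P - 2*d*(d+2))/(A*B)).
  assert (HN : 0.92 <= N <= 1) by (unfold N; lra).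
  set (LB := L0*B6). assert (HLB : 3.39 <= LB <= 4) by (unfold LB; nra).
  set (X := d^2 + 2*(1+LB)*d).
  assert (HX : 0 <= X <= 1.32) by (unfold X; nra).
  assert (HXA : 0 <= X/A^2 <= 0.33).
  { split; [apply div_nonneg; nra | apply div_le; nra]. }
  set (Q := 1 + X/A^2). assert (HQ : 1 <= Q <= 1.33) by (unfold Q; lra).
  set (M := (1+E6)*(E5-E3)+2*d+4). assert (HM : 0 <= M <= 4.42) by (unfold M; nra).
  assert (HQMB : 0 <= Q*M/B <= 2.94).
  { split; [apply div_nonneg; nra | apply div_le; nra]. }
  set (Y := d + 2*(1+LB)). assert (HY : 0 <= Y <= 10.13) by (unfold Y; lra).
  assert (HNYA : 0 <= N*Y/A <= 5.07).
  { split; [apply div_nonneg; nra | apply div_le; nra]. }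
  assert (E1 : Q*e1*M/B = e1 * (Q*M/B)) by (unfold Rdiv; ring).
  assert (E2 : N*Y*e1/A = e1 * (N*Y/A)) by (unfold Rdiv; ring).
  rewrite E1, E2.
  assert (P0 : 0.92*3.2 <= N * (- L1)) by nra.
  assert (P1 : 0.92*3.2*1.843 <= - N * L1 * B6) by nra.
  assert (P2 : -0.66 * 2.94 <= e1 * (Q*M/B)).
  { assert (0 <= (e1 + 0.66) * (Q*M/B)) by (apply Rmult_le_pos; lra). nra. }
  assert (P3 : -0.66 * 5.07 <= e1 * (N*Y/A)).
  { assert (0 <= (e1 + 0.66) * (N*Y/A)) by (apply Rmult_le_pos; lra). nra. }
  lra.
Qed.

Lemma core (d E3 E5 E6 B3 B5 B6 : R) (e L : R -> R) (x e1 L1 : R) :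
  0 <= d <= 0.13 -> 0 <= e x <= 0.13 -> 0 <= E3 <= 0.13 -> 0 <= E5 <= 0.13 -> 0 <= E6 <= 0.13 ->
  1.843 <= L x <= 2 -> 1.843 <= B6 <= 2 -> 0 <= B3 -> 0 <= B5 ->
  -0.66 <= e1 -> L1 <= -3.2 -> is_derive e x e1 -> is_derive L x L1 ->
  exists l, is_derive (fun t => G d (e t) E3 E5 E6 (L t) B3 B5 B6) x l /\ 0 <= l.
Proof.
  intros Hd He0 HE3 HE5 HE6 HL0 HB6 HB3 HB5 He1 HL1 De DL.
  assert (HA : 0 < 2 + e x + E6) by lra.
  assert (HB : 0 < 2 + E3 + E5) by lra.
  assert (Hq : 0 < 1 + (d * (d * 1) + 2 * (1 + L x * B6) * d) * / ((2 + e x + E6) * ((2 + e x + E6) * 1))).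
  { assert (0 <= (d * (d * 1) + 2 * (1 + L x * B6) * d) * / ((2 + e x + E6) * ((2 + e x + E6) * 1))).
    { assert (0 <= L x * B6) by nra.
      apply Rmult_le_pos; [nra | left; apply Rinv_0_lt_compat; nra]. }
    lra. }
  assert (Hq2 : 0 < 1 + (d * (d * 1) + 2 * (1 + B3 * B5) * d) / ((2 + E3 + E5) * ((2 + E3 + E5) * 1))).
  { assert (0 <= (d * (d * 1) + 2 * (1 + B3 * B5) * d) / ((2 + E3 + E5) * ((2 + E3 + E5) * 1))).
    { assert (0 <= B3 * B5) by nra. apply div_nonneg; nra. }
    lra. }
  eexists; split.
  { unfold G. auto_derive.
    - repeat split; try (eexists; exact De); try (eexists; exact DL); try nra; try lra.
      apply Rmult_integral_contrapositive_currified; apply Rgt_not_eq, sqrt_lt_R0; assumption.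
    - reflexivity. }
  replace (Derive (fun x0 => e x0) x) with e1 by (symmetry; apply is_derive_unique; exact De).
  replace (Derive (fun x0 => L x0) x) with L1 by (symmetry; apply is_derive_unique; exact DL).
  set (e0 := e x) in *. set (L0 := L x) in *.
  set (q := 1 + (d * (d * 1) + 2 * (1 + L0 * B6) * d) * / ((2 + e0 + E6) * ((2 + e0 + E6) * 1))) in *.
  set (q2 := 1 + (d * (d * 1) + 2 * (1 + B3 * B5) * d) / ((2 + E3 + E5) * ((2 + E3 + E5) * 1))) in *.
  pose proof (sqrt_sqrt q ltac:(lra)) as Hs.
  pose proof (sqrt_lt_R0 q Hq) as Hs0.
  pose proof (sqrt_lt_R0 q2 Hq2) as Hs20.
  set (s := sqrt q) in *. set (s2 := sqrt q2) in *.
  set (A := 2 + e0 + E6). set (B := 2 + E3 + E5).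
  set (P := (1+e0)*(1+E5)+(1+E3)*(1+E6)).
  set (N := 1 + (d*P - 2*d*(d+2))/(A*B)).
  set (X := d^2 + 2*(1+L0*B6)*d).
  set (M := (1+E6)*(E5-E3)+2*d+4).
  set (N1 := d*e1*M/(A^2*B)).
  set (Q1 := 2*d*L1*B6/A^2 - 2*X*e1/A^3).
  match goal with |- 0 <= ?Z => assert (E : Z = (2*(s*s)*N1 - N*Q1)/(2*(s*s*s)*s2)) end.
  { unfold N1, Q1, N, M, X, P, A, B. field. repeat split; lra. }
  rewrite E. apply div_nonneg.
  2:{ apply Rmult_lt_0_compat; [|lra]. apply Rmult_lt_0_compat; [lra|]. apply Rmult_lt_0_compat; nra. }
  rewrite Hs.
  assert (E2 : 2*q*N1 - N*Q1 = 2*d/A^2 * Tf d e0 E3 E5 E6 L0 B6 e1 L1).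
  { unfold q, Tf, N1, Q1, N, M, X, P, A, B. field. lra. }
  rewrite E2. apply Rmult_le_pos.
  - apply div_nonneg; [lra|]. unfold A; nra.
  - apply T_nonneg; assumption.
Qed.

Lemma eta_deriv_bound xi y : 0 <= xi <= 0.13 -> 0.765 <= y < 1 ->
  -0.66 <= - (eta xi y ^ 2 + 10 * eta xi y + 4 * (1+xi)^2) / (2 * sqrt (Dis xi y)).
Proof.
  intros Hxi Hy.
  pose proof (eta_bounds xi y Hxi Hy) as He.
  pose proof (Dis_pos xi y ltac:(lra) ltac:(lra)) as HD.
  pose proof (sqrt_lt_R0 (Dis xi y) HD) as Hs0.
  assert (Hse : sqrt (Dis xi y) = (2+y) * eta xi y + (2 + 5*y - (1+xi)^2)).
  { rewrite eta_eq. field. lra. }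
  rewrite Hse in *. set (e := eta xi y) in *.
  assert (Ha : 1 <= (1+xi)^2 <= 1.2769) by nra.
  set (a := (1+xi)^2) in *.
  apply div_ge; [lra|]. nra.
Qed.

Definition Lf (t : R) : R :=
  ((2 - b (c 10)) * b t - (2 - b (c 9)) * b (c 10)) / (b (c 9) - b (c 10)).

Lemma beta_Lf t : t <= c 10 -> beta t = Lf t.
Proof. intros H. unfold beta, Lf. destruct (Rle_dec t (c 10)); [reflexivity | contradiction]. Qed.

Lemma b9_bounds : 2.054 <= b (c 9) <= 2.066.
Proof.
  pose proof c9_bounds. unfold b.
  split.
  - assert (9.054 <= 16 / (c 9 + 1)) by (apply div_ge; lra). lra.
  - assert (16 / (c 9 + 1) <= 9.066) by (apply div_le; lra). lra.
Qed.

Lemma b10_bounds : 1.844 <= b (c 10) <= 1.85.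
Proof.
  pose proof c10_bounds. unfold b.
  split.
  - assert (8.844 <= 16 / (c 10 + 1)) by (apply div_ge; lra). lra.
  - assert (16 / (c 10 + 1) <= 8.85) by (apply div_le; lra). lra.
Qed.

Lemma b_mono y z : -1 < y -> y <= z -> b z <= b y.
Proof.
  intros Hy Hyz. unfold b.
  assert (16 / (z + 1) <= 16 / (y + 1)).
  { apply Rmult_le_compat_l; [lra|]. apply Rinv_le_contravar; lra. }
  lra.
Qed.

Lemma Lf_bounds t : c 9 <= t <= c 10 -> 1.843 <= Lf t <= 2.
Proof.
  intros Ht. pose proof b9_bounds. pose proof b10_bounds. pose proof c9_bounds. pose proof c10_bounds.
  assert (Hb1 : b t <= b (c 9)) by (apply b_mono; lra).
  assert (Hb2 : b (c 10) <= b t) by (apply b_mono; lra).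
  unfold Lf. set (b9 := b (c 9)) in *. set (b10 := b (c 10)) in *. set (u := b t) in *.
  split.
  - apply div_ge; [lra|]. nra.
  - apply div_le; [lra|]. nra.
Qed.

Lemma Lf_deriv x : c 9 <= x <= c 10 ->
  is_derive Lf x (- (16 * (2 - b (c 10))) / ((x+1)^2 * (b (c 9) - b (c 10)))).
Proof.
  intros Hx. pose proof b9_bounds. pose proof b10_bounds. pose proof c9_bounds. pose proof c10_bounds.
  unfold Lf.
  set (b9 := b (c 9)) in *. set (b10 := b (c 10)) in *. clearbody b9 b10.
  unfold b. auto_derive.
  - repeat split; lra.
  - field. split; lra.
Qed.

Lemma Lf_deriv_bound x : c 9 <= x <= c 10 ->
  - (16 * (2 - b (c 10))) / ((x+1)^2 * (b (c 9) - b (c 10))) <= -3.2.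
Proof.
  intros Hx. pose proof b9_bounds. pose proof b10_bounds. pose proof c9_bounds. pose proof c10_bounds.
  set (b9 := b (c 9)) in *. set (b10 := b (c 10)) in *.
  assert (Hx2 : 3.0 <= (x+1)^2 <= 3.2729) by nra.
  apply div_le. { apply Rmult_lt_0_compat; lra. }
  nra.
Qed.

Lemma beta_bounds y : c 9 <= y <= c 10 -> 1.843 <= beta y <= 2.
Proof. intros H. rewrite (beta_Lf y) by lra. apply Lf_bounds; lra. Qed.

Lemma beta_nonneg y : c 9 <= y < 1 -> 0 <= beta y.
Proof.
  intros H. destruct (Rle_dec y (c 10)) as [h|h].
  - pose proof (beta_bounds y ltac:(lra)). lra.
  - unfold beta. destruct (Rle_dec y (c 10)); [contradiction|].
    unfold b. pose proof c9_bounds.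
    assert (8 <= 16 / (y + 1)) by (apply div_ge; lra). lra.
Qed.

Lemma within_of_derive (D : R -> Prop) (f g : R -> R) (x l : R) :
  (forall t, D t -> f t = g t) -> D x -> is_derive g x l -> is_derive_within D f x l.
Proof.
  intros Hfg Hx Hd. apply is_derive_Reals in Hd.
  unfold is_derive_within. apply filterlim_locally. intros eps.
  destruct (Hd eps (cond_pos eps)) as [delta Hdelta].
  unfold within. exists delta. intros t Ht [HDt Hne]. change R in t.
  rewrite (Hfg t HDt), (Hfg x Hx).
  assert (Hh : t - x <> 0) by (intro; apply Hne; lra).
  assert (Hb : Rabs (t - x) < delta).
  { revert Ht. unfold ball; simpl. unfold AbsRing_ball, abs, minus, plus, opp; simpl. auto. }
  specialize (Hdelta (t - x) Hh Hb).
  replace (x + (t - x)) with t in Hdelta by ring.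
  unfold ball; simpl. unfold AbsRing_ball, abs, minus, plus, opp; simpl. exact Hdelta.
Qed.

Lemma glue xi d x (f : R -> R) E3 E5 E6 B3 B5 B6 :
  0 <= xi <= 0.13 -> 0 <= d <= 0.13 -> c 9 <= x <= c 10 ->
  0 <= E3 <= 0.13 -> 0 <= E5 <= 0.13 -> 0 <= E6 <= 0.13 ->
  1.843 <= B6 <= 2 -> 0 <= B3 -> 0 <= B5 ->
  (forall t, c 9 <= t <= c 10 -> f t = G d (eta xi t) E3 E5 E6 (Lf t) B3 B5 B6) ->
  exists l, is_derive_within (fun t => c 9 <= t <= c 10) f x l /\ 0 <= l.
Proof.
  intros Hxi Hd Hx HE3 HE5 HE6 HB6 HB3 HB5 Hf.
  pose proof c9_bounds. pose proof c10_bounds.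
  destruct (core d E3 E5 E6 B3 B5 B6 (eta xi) Lf x
     (- (eta xi x ^ 2 + 10 * eta xi x + 4 * (1+xi)^2) / (2 * sqrt (Dis xi x)))
     (- (16 * (2 - b (c 10))) / ((x+1)^2 * (b (c 9) - b (c 10)))))
    as [l [Hl1 Hl2]]; try assumption.
  - apply eta_bounds; lra.
  - apply Lf_bounds; lra.
  - apply eta_deriv_bound; lra.
  - apply Lf_deriv_bound; lra.
  - apply eta_deriv; lra.
  - apply Lf_deriv; lra.
  - exists l. split; [|exact Hl2].
    apply within_of_derive with (g := fun t => G d (eta xi t) E3 E5 E6 (Lf t) B3 B5 B6); auto.
Qed.

Lemma G_sym26 d e2 e3 e5 e6 b2 b3 b5 b6 :
  G d e2 e3 e5 e6 b2 b3 b5 b6 = G d e6 e5 e3 e2 b6 b5 b3 b2.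
Proof.
  unfold G.
  replace (2 + e6 + e2) with (2 + e2 + e6) by ring.
  replace (2 + e5 + e3) with (2 + e3 + e5) by ring.
  replace ((1 + e6) * (1 + e3) + (1 + e5) * (1 + e2)) with ((1 + e2) * (1 + e5) + (1 + e3) * (1 + e6)) by ring.
  rewrite (Rmult_comm b6 b2), (Rmult_comm b5 b3). reflexivity.
Qed.

Lemma G_sym23 d e2 e3 e5 e6 b2 b3 b5 b6 :
  G d e2 e3 e5 e6 b2 b3 b5 b6 = G d e3 e2 e6 e5 b3 b2 b6 b5.
Proof.
  unfold G.
  replace ((1 + e3) * (1 + e6) + (1 + e2) * (1 + e5)) with ((1 + e2) * (1 + e5) + (1 + e3) * (1 + e6)) by ring.
  rewrite (Rmult_comm (2 + e3 + e5) (2 + e2 + e6)).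
  rewrite (Rmult_comm (sqrt (1 + (d ^ 2 + 2 * (1 + b3 * b5) * d) / (2 + e3 + e5) ^ 2))).
  reflexivity.
Qed.

Lemma one xi y2 y3 y5 y6 :
    0 <= xi <= 0.13 ->
    c 9 <= y2 < 1 -> c 9 <= y3 < 1 -> c 9 <= y5 < 1 -> c 9 <= y6 < 1 ->
    forall j : nat, valid_index j ->
      yval j y2 y3 y5 y6 <= c 10 ->
      yval (pair_index j) y2 y3 y5 y6 <= c 10 ->
      forall d : R, 0 <= d <= 0.13 ->
        dpsi_nonneg xi d y2 y3 y5 y6 j.
Proof.
  intros Hxi H2 H3 H5 H6 j Hj Hy Hyp d Hd.
  pose proof c9_bounds.
  assert (E2 := eta_bounds xi y2 Hxi ltac:(lra)).
  assert (E3 := eta_bounds xi y3 Hxi ltac:(lra)).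
  assert (E5 := eta_bounds xi y5 Hxi ltac:(lra)).
  assert (E6 := eta_bounds xi y6 Hxi ltac:(lra)).
  assert (B2 := beta_nonneg y2 H2). assert (B3 := beta_nonneg y3 H3).
  assert (B5 := beta_nonneg y5 H5). assert (B6 := beta_nonneg y6 H6).
  unfold dpsi_nonneg.
  destruct Hj as [-> | [-> | [-> | ->]]]; simpl in Hy, Hyp |- *.
  - apply (glue xi d y2 _ (eta xi y3) (eta xi y5) (eta xi y6) (beta y3) (beta y5) (beta y6)); try assumption; try lra.
    + apply beta_bounds; lra.
    + intros t Ht. unfold psi_coord, psi; simpl. rewrite (beta_Lf t) by lra. reflexivity.
  - apply (glue xi d y3 _ (eta xi y2) (eta xi y6) (eta xi y5) (beta y2) (beta y6) (beta y5)); try assumption; try lra.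
    + apply beta_bounds; lra.
    + intros t Ht. unfold psi_coord, psi; simpl. rewrite (beta_Lf t) by lra. rewrite G_sym23. reflexivity.
  - apply (glue xi d y5 _ (eta xi y6) (eta xi y2) (eta xi y3) (beta y6) (beta y2) (beta y3)); try assumption; try lra.
    + apply beta_bounds; lra.
    + intros t Ht. unfold psi_coord, psi; simpl. rewrite (beta_Lf t) by lra. rewrite G_sym23, G_sym26. reflexivity.
  - apply (glue xi d y6 _ (eta xi y5) (eta xi y3) (eta xi y2) (beta y5) (beta y3) (beta y2)); try assumption; try lra.
    + apply beta_bounds; lra.
    + intros t Ht. unfold psi_coord, psi; simpl. rewrite (beta_Lf t) by lra. rewrite G_sym26. reflexivity.
Qed.

Theorem lemma4p4 :
  forall xi y2 y3 y5 y6 : R,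
    0 <= xi <= 0.13 ->
    c 9 <= y2 < 1 -> c 9 <= y3 < 1 -> c 9 <= y5 < 1 -> c 9 <= y6 < 1 ->
    forall j : nat, valid_index j ->
      yval j y2 y3 y5 y6 <= c 10 ->
      yval (pair_index j) y2 y3 y5 y6 <= c 10 ->
      forall d : R, 0 <= d <= 0.13 ->
        dpsi_nonneg xi d y2 y3 y5 y6 j /\
        dpsi_nonneg xi d y2 y3 y5 y6 (pair_index j).
Proof.
  intros xi y2 y3 y5 y6 Hxi H2 H3 H5 H6 j Hj Hy Hyp d Hd.
  split.
  - eapply one; eauto.
  - assert (Hpp : pair_index (pair_index j) = j) by (destruct Hj as [-> | [-> | [-> | ->]]]; reflexivity).
    assert (Hv : valid_index (pair_index j)).
    { destruct Hj as [-> | [-> | [-> | ->]]]; unfold valid_index; simpl; auto. }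
    eapply one; eauto. rewrite Hpp. exact Hy.
Qed.
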